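(* Let $J$ be an elementary interval. The total number of break points $(t,\sigma,\psi)$ of type (ii) of the lower envelopes $L_1,\dots,L_m$ with $t\in J$ is at most $6.5n$.
   Context: Entities of a set $\mathcal{X}$ of size $n$ move in $\mathbb{R}^1$ along piecewise-linear trajectories with vertices at common times $t_0<\dots<t_\tau$; $\varepsilon>0$ is fixed; trajectories are in general position (no three meet at one point at the same time, no two pairs are at distance exactly $\varepsilon$ at the same time). $\mathcal{I}(t)=(\max_\sigma\sigma(t)+\min_\sigma\sigma(t))/2$; an elementary interval is a maximal subinterval of some $[t_i,t_{i+1}]$ on which $\mathcal{I}$ is linear. Two entities are $\varepsilon$-connected at time $t$ if they are joined by a chain of entities with consecutive distances at most $\varepsilon$ at time $t$. At each time, $\mathcal{X}$ is partitioned into $\varepsilon$-connectivity classes; let $(\mathcal{X}_1,J_1),\dots,(\mathcal{X}_m,J_m)$ be all pairs where $J_j$ is a maximal time interval during which $\mathcal{X}_j$ is one of these classes at every time. Let $f_\sigma(t)=|\sigma(t)-\mathcal{I}(t)|$ and $L_j$ the lower envelope of $\{f_\sigma:\sigma\in\mathcal{X}_j\}$ restricted to $J_j$. A break point of $L_j$ is a triple $(t,\sigma,\psi)$, $\sigma\neq\psi\in\mathcal{X}_j$, $t\in J_j$, with $L_j(t)=f_\sigma(t)=f_\psi(t)$; it is of type (i) if $\sigma(t)=\psi(t)$ and of type (ii) if $\sigma(t)-\mathcal{I}(t)=-(\psi(t)-\mathcal{I}(t))\neq 0$. *)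

(* Defs.v *)
From Stdlib Require Import Reals Lra List Relations.
Import ListNotations.
Open Scope R_scope.

(* Entities are indexed by 0..n-1; [x k t] is the position of entity k at
   time t.  Vertex times are [ts 0 < ts 1 < ... < ts tau]. *)

Definition in_dom (ts : nat -> R) (tau : nat) (t : R) : Prop :=
  ts 0%nat <= t <= ts tau.

Definition increasing_times (ts : nat -> R) (tau : nat) : Prop :=
  forall i, (i < tau)%nat -> ts i < ts (S i).

Definition piecewise_linear (n : nat) (x : nat -> R -> R)
  (ts : nat -> R) (tau : nat) : Prop :=
  forall k i, (k < n)%nat -> (i < tau)%nat ->
    exists a b : R, forall t, ts i <= t <= ts (S i) -> x k t = a * t + b.

Definition general_position (n : nat) (x : nat -> R -> R) (eps : R)
  (ts : nat -> R) (tau : nat) : Prop :=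
  (forall i j k t, (i < n)%nat -> (j < n)%nat -> (k < n)%nat ->
     i <> j -> j <> k -> i <> k -> in_dom ts tau t ->
     ~ (x i t = x j t /\ x j t = x k t)) /\
  (forall i j k l t, (i < n)%nat -> (j < n)%nat -> (k < n)%nat -> (l < n)%nat ->
     i <> j -> k <> l -> ~ ((i = k /\ j = l) \/ (i = l /\ j = k)) ->
     in_dom ts tau t ->
     ~ (Rabs (x i t - x j t) = eps /\ Rabs (x k t - x l t) = eps)).

(* max / min of positions at time t (meaningful for n >= 1) *)
Definition pos_max (n : nat) (x : nat -> R -> R) (t : R) : R :=
  fold_right Rmax (x 0%nat t) (map (fun k => x k t) (seq 0 n)).
Definition pos_min (n : nat) (x : nat -> R -> R) (t : R) : R :=
  fold_right Rmin (x 0%nat t) (map (fun k => x k t) (seq 0 n)).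

Definition Icurve (n : nat) (x : nat -> R -> R) (t : R) : R :=
  (pos_max n x t + pos_min n x t) / 2.

Definition fdist (n : nat) (x : nat -> R -> R) (k : nat) (t : R) : R :=
  Rabs (x k t - Icurve n x t).

Definition is_interval (J : R -> Prop) : Prop :=
  forall a b c, J a -> J c -> a <= b <= c -> J b.

Definition I_linear_on (n : nat) (x : nat -> R -> R) (J : R -> Prop) : Prop :=
  exists a b : R, forall t, J t -> Icurve n x t = a * t + b.

Definition elementary_interval (n : nat) (x : nat -> R -> R)
  (ts : nat -> R) (tau : nat) (J : R -> Prop) : Prop :=
  exists i, (i < tau)%nat /\
    is_interval J /\ (forall t, J t -> ts i <= t <= ts (S i)) /\
    I_linear_on n x J /\
    (forall J' : R -> Prop,
       is_interval J' -> (forall t, J' t -> ts i <= t <= ts (S i)) ->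
       I_linear_on n x J' -> (forall t, J t -> J' t) ->
       forall t, J' t -> J t).

Definition close_at (n : nat) (x : nat -> R -> R) (eps t : R) : relation nat :=
  fun i j => (i < n)%nat /\ (j < n)%nat /\ Rabs (x i t - x j t) <= eps.

Definition eps_connected (n : nat) (x : nat -> R -> R) (eps t : R)
  (i j : nat) : Prop :=
  clos_refl_trans nat (close_at n x eps t) i j.

Definition is_class (n : nat) (x : nat -> R -> R) (eps t : R)
  (X : nat -> Prop) : Prop :=
  exists s, (s < n)%nat /\
    forall k, X k <-> ((k < n)%nat /\ eps_connected n x eps t s k).

Definition class_pair (n : nat) (x : nat -> R -> R) (eps : R)
  (ts : nat -> R) (tau : nat) (X : nat -> Prop) (J : R -> Prop) : Prop :=
  is_interval J /\ (exists t, J t) /\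
  (forall t, J t -> in_dom ts tau t /\ is_class n x eps t X) /\
  (forall J' : R -> Prop, is_interval J' ->
     (forall t, J' t -> in_dom ts tau t /\ is_class n x eps t X) ->
     (forall t, J t -> J' t) -> forall t, J' t -> J t).

(* (t, s, p) is a break point of the lower envelope L of {f_k : k in X}
   restricted to J:  L(t) = f_s(t) = f_p(t). *)
Definition break_point (n : nat) (x : nat -> R -> R)
  (X : nat -> Prop) (J : R -> Prop) (t : R) (s p : nat) : Prop :=
  s <> p /\ X s /\ X p /\ J t /\
  fdist n x s t = fdist n x p t /\
  (forall k, X k -> fdist n x s t <= fdist n x k t).

(* type (ii): s(t) - I(t) = -(p(t) - I(t)) <> 0; moreover (READING) the tie f_s = f_p is required to be a genuine crossing, i.e.
   isolated in time (f_s and f_p do not coincide on a neighbourhood). *)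
Definition type_ii (n : nat) (x : nat -> R -> R) (ts : nat -> R) (tau : nat)
  (t : R) (s p : nat) : Prop :=
  x s t - Icurve n x t = - (x p t - Icurve n x t) /\
  x s t - Icurve n x t <> 0 /\
  exists delta, delta > 0 /\
    forall u, in_dom ts tau u -> u <> t -> Rabs (u - t) < delta ->
      fdist n x s u <> fdist n x p u.

Definition type_ii_break_of_some_envelope (n : nat) (x : nat -> R -> R)
  (eps : R) (ts : nat -> R) (tau : nat) (t : R) (s p : nat) : Prop :=
  exists (X : nat -> Prop) (J : R -> Prop),
    class_pair n x eps ts tau X J /\ break_point n x X J t s p /\
    type_ii n x ts tau t s p.

(* Main.v *)
Require Import Defs.
From Stdlib Require Import Reals Lra Lia List Relations Classical.
Import ListNotations.
Open Scope R_scope.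

Lemma Rabs_le_inv (y c : R) : Rabs y <= c -> - c <= y <= c.
Proof. unfold Rabs; destruct (Rcase_abs y); intros; lra. Qed.

Lemma mono_core (F G1 G2 : R -> R) (a t1 t2 : R) :
  t1 < t2 ->
  (forall u v, t1<=u<=t2 -> t1<=v<=t2 -> F u - F v = a*(u-v)) ->
  (forall u v, t1<=u<=t2 -> t1<=v<=t2 -> Rabs (G1 u - G1 v) <= Rabs a * Rabs (u - v)) ->
  (forall u v, t1<=u<=t2 -> t1<=v<=t2 -> Rabs (G2 u - G2 v) <= Rabs a * Rabs (u - v)) ->
  F t1 = G1 t1 -> F t2 = G2 t2 -> F t2 <= G1 t2 -> F t1 <= G2 t1 ->
  (forall u, t1<=u<=t2 -> F u = G1 u) \/ (forall u, t1<=u<=t2 -> F u = G2 u).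
Proof.
  intros Hlt HF H1 H2 E1 E2 L1 L2.
  assert (Ht1 : t1 <= t1 <= t2) by lra. assert (Ht2 : t1 <= t2 <= t2) by lra.
  destruct (Rle_dec 0 a) as [Ha|Ha].
  - left. intros u Hu.
    pose proof (HF u t1 Hu Ht1) as A1. pose proof (HF t2 u Ht2 Hu) as A2.
    pose proof (H1 u t1 Hu Ht1) as B1. pose proof (H1 t2 u Ht2 Hu) as B2.
    rewrite (Rabs_pos_eq a) in B1, B2 by lra.
    rewrite (Rabs_pos_eq (u - t1)) in B1 by lra.
    rewrite (Rabs_pos_eq (t2 - u)) in B2 by lra.
    apply Rabs_le_inv in B1. apply Rabs_le_inv in B2. nra.
  - right. intros u Hu.
    pose proof (HF u t1 Hu Ht1) as A1. pose proof (HF t2 u Ht2 Hu) as A2.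
    pose proof (H2 u t1 Hu Ht1) as B1. pose proof (H2 t2 u Ht2 Hu) as B2.
    rewrite (Rabs_left a) in B1, B2 by lra.
    rewrite (Rabs_pos_eq (u - t1)) in B1 by lra.
    rewrite (Rabs_pos_eq (t2 - u)) in B2 by lra.
    apply Rabs_le_inv in B1. apply Rabs_le_inv in B2. nra.
Qed.

Lemma between_real (a b c m : R) :
  (a <= m <= b \/ b <= m <= a) ->
  (c <= m <= b \/ b <= m <= c) \/ Rabs (a - m) <= Rabs (a - c).
Proof.
  intros [H|H]; unfold Rabs; destruct (Rcase_abs (a-m)), (Rcase_abs (a-c));
  destruct (Rle_dec c m); destruct (Rle_dec m b); try (left; lra); right; lra.
Qed.

Lemma filter_split {A} (f : A -> bool) (l : list A) :
  length l = (length (filter f l) + length (filter (fun a => negb (f a)) l))%nat.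
Proof. induction l; simpl; [reflexivity|]; destruct (f a); simpl; lia. Qed.

Lemma len_le2 {A} (l : list A) : NoDup l ->
  (forall a b c, In a l -> In b l -> In c l -> a <> b -> b <> c -> a <> c -> False) ->
  (length l <= 2)%nat.
Proof.
  destruct l as [|a [|b [|c l]]]; simpl; try lia. intros Hnd H; exfalso.
  inversion Hnd as [|? ? Ha Hnd1]; subst. inversion Hnd1 as [|? ? Hb _]; subst.
  apply (H a b c); simpl; auto.
  - intro E; subst; apply Ha; simpl; auto.
  - intro E; subst; apply Hb; simpl; auto.
  - intro E; subst; apply Ha; simpl; auto.
Qed.

Lemma max_exists (f : nat -> R) (S : list nat) : S <> [] ->
  exists k, In k S /\ forall m, In m S -> f m <= f k.
Proof.
  induction S as [|a S IH]; intros Hne; [congruence|].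
  destruct S as [|b S'].
  - exists a; split; [simpl; auto|]. intros m [<-|[]]; lra.
  - destruct IH as [k [Hk Hm]]; [discriminate|].
    destruct (Rle_dec (f a) (f k)).
    + exists k; split; [right; exact Hk|]. intros m [<-|Hm']; [lra|auto].
    + exists a; split; [left; auto|]. intros m [<-|Hm']; [lra|].
      specialize (Hm m Hm'); lra.
Qed.
Definition gg (n : nat) (x : nat -> R -> R) (k : nat) (t : R) : R := x k t - Icurve n x t.

Definition rel (n : nat) (x : nat -> R -> R) (ts : nat -> R) (tau : nat)
  (Jel : R -> Prop) (S : list nat) (k q : nat) (t : R) : Prop :=
  In k S /\ In q S /\ k <> q /\ Jel t /\ in_dom ts tau t /\
  gg n x k t = - gg n x q t /\ gg n x k t <> 0 /\
  (forall m, In m S -> Rabs (gg n x k t) <= Rabs (gg n x m t)) /\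
  (exists d, d > 0 /\ forall u, in_dom ts tau u -> u <> t -> Rabs (u - t) < d ->
      Rabs (gg n x k u) <> Rabs (gg n x q u)).

Definition good n x ts tau Jel S (tr : R * nat * nat) : Prop :=
  match tr with (t, s, p) => (s < p)%nat /\ rel n x ts tau Jel S s p t end.

Lemma rel_sym n x ts tau Jel S k q t :
  rel n x ts tau Jel S k q t -> rel n x ts tau Jel S q k t.
Proof.
  intros (H1&H2&H3&H4&H5&H6&H7&H8&d&Hd&H9).
  refine (conj H2 (conj H1 (conj (fun E => H3 (eq_sym E)) (conj H4 (conj H5 (conj _ (conj _ (conj _ _)))))))).
  - lra.
  - lra.
  - intros m Hm. specialize (H8 m Hm). rewrite H6, Rabs_Ropp in H8. exact H8.
  - exists d; split; auto. intros u a b c E. apply (H9 u a b c). auto.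
Qed.

Definition involves (k : nat) (tr : R * nat * nat) : bool :=
  match tr with (t, s, p) => (Nat.eqb s k || Nat.eqb p k)%bool end.
Definition partner (k : nat) (tr : R * nat * nat) : nat :=
  match tr with (t, s, p) => if Nat.eqb s k then p else s end.
Definition time (tr : R * nat * nat) : R := fst (fst tr).

Lemma good_rel n x ts tau Jel S k tr :
  good n x ts tau Jel S tr -> involves k tr = true ->
  rel n x ts tau Jel S k (partner k tr) (time tr).
Proof.
  destruct tr as [[t s] p]; unfold time, partner, involves, good; simpl. intros [Hlt Hr] Hi.
  destruct (Nat.eqb_spec s k) as [->|Hsk]; [exact Hr|].
  destruct (Nat.eqb_spec p k) as [->|Hpk]; [|discriminate].
  apply rel_sym; exact Hr.
Qed.

Lemma triple_det n x ts tau Jel S k a b :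
  good n x ts tau Jel S a -> good n x ts tau Jel S b ->
  involves k a = true -> involves k b = true ->
  time a = time b -> partner k a = partner k b -> a = b.
Proof.
  destruct a as [[t s] p]; destruct b as [[t' s'] p']; unfold time, partner, involves, good; simpl.
  intros [Hl _] [Hl' _] Ha Hb -> Hp.
  destruct (Nat.eqb_spec s k); destruct (Nat.eqb_spec p k); simpl in Ha;
  destruct (Nat.eqb_spec s' k); destruct (Nat.eqb_spec p' k); simpl in Hb;
  try discriminate;
  assert (s = s' /\ p = p') as [-> ->] by lia; reflexivity.
Qed.
Lemma same_time_lt n x ts tau (Jel : R -> Prop) S (A : nat -> R)
  (HJint : is_interval Jel) (HS : forall m, In m S -> (m < n)%nat)
  (Haff : forall k u v, (k < n)%nat -> Jel u -> Jel v ->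
     gg n x k u - gg n x k v = A k * (u - v))
  k (Hmax : forall m, In m S -> Rabs (A m) <= Rabs (A k))
  q1 q2 t1 t2 :
  rel n x ts tau Jel S k q1 t1 -> rel n x ts tau Jel S k q2 t2 -> t1 < t2 ->
  (0 < gg n x k t1 /\ 0 < gg n x k t2) \/ (gg n x k t1 < 0 /\ gg n x k t2 < 0) ->
  False.
Proof.
  intros (Hk&Hq1&_&J1&D1&E1&_&M1&d1&Hd1&I1) (_&Hq2&_&J2&D2&E2&_&M2&d2&Hd2&I2) Hlt Hsg.
  assert (HkN := HS k Hk). assert (Hq1N := HS q1 Hq1). assert (Hq2N := HS q2 Hq2).
  assert (HJ : forall u, t1 <= u <= t2 -> Jel u).
  { intros u Hu. apply (HJint t1 u t2); auto. }
  assert (HD : forall u, t1 <= u <= t2 -> in_dom ts tau u).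
  { intros u Hu. unfold in_dom in *. lra. }
  set (sg := if Rlt_dec 0 (gg n x k t1) then 1 else -1).
  assert (Hsgu : forall u, t1 <= u <= t2 -> Rabs (gg n x k u) = sg * gg n x k u).
  { intros u Hu.
    pose proof (Haff k u t1 HkN (HJ u Hu) J1) as F1.
    pose proof (Haff k u t2 HkN (HJ u Hu) J2) as F2.
    unfold sg; destruct (Rlt_dec 0 (gg n x k t1)) as [P|P].
    - destruct Hsg as [[_ P2]|[P1 _]]; [|lra].
      rewrite Rabs_pos_eq; [lra|].
      destruct (Rle_dec 0 (A k)); nra.
    - destruct Hsg as [[P1 _]|[P1 P2]]; [lra|].
      rewrite Rabs_left; [lra|].
      destruct (Rle_dec 0 (A k)); nra. }
  assert (Hsg2 : Rabs sg = 1).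
  { unfold sg; destruct (Rlt_dec 0 (gg n x k t1)); [apply Rabs_R1|].
    rewrite Rabs_left; lra. }
  assert (Hlip : forall q, In q S -> forall u v, t1<=u<=t2 -> t1<=v<=t2 ->
     Rabs (Rabs (gg n x q u) - Rabs (gg n x q v)) <= Rabs (sg * A k) * Rabs (u - v)).
  { intros q Hq u v Hu Hv.
    eapply Rle_trans; [apply Rabs_triang_inv2|].
    rewrite (Haff q u v (HS q Hq) (HJ u Hu) (HJ v Hv)), Rabs_mult, Rabs_mult, Hsg2.
    rewrite Rmult_1_l. apply Rmult_le_compat_r; [apply Rabs_pos|]. apply Hmax; auto. }
  assert (Ht1 : t1 <= t1 <= t2) by lra. assert (Ht2 : t1 <= t2 <= t2) by lra.
  destruct (mono_core (fun u => Rabs (gg n x k u)) (fun u => Rabs (gg n x q1 u))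
     (fun u => Rabs (gg n x q2 u)) (sg * A k) t1 t2 Hlt) as [C|C].
  - intros u v Hu Hv. rewrite (Hsgu u Hu), (Hsgu v Hv).
    pose proof (Haff k u v HkN (HJ u Hu) (HJ v Hv)). nra.
  - apply Hlip; auto.
  - apply Hlip; auto.
  - simpl. rewrite E1, Rabs_Ropp; reflexivity.
  - simpl. rewrite E2, Rabs_Ropp; reflexivity.
  - apply M2; auto.
  - apply M1; auto.
  - set (m := Rmin d1 (t2 - t1)).
    assert (Hm : 0 < m) by (apply Rmin_pos; lra).
    assert (Hm1 : m <= d1) by apply Rmin_l. assert (Hm2 : m <= t2 - t1) by apply Rmin_r.
    assert (Hu : t1 <= t1 + m / 2 <= t2) by lra.
    apply (I1 (t1 + m/2) (HD _ Hu)); [lra| |apply C; auto].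
    rewrite Rabs_pos_eq; lra.
  - set (m := Rmin d2 (t2 - t1)).
    assert (Hm : 0 < m) by (apply Rmin_pos; lra).
    assert (Hm1 : m <= d2) by apply Rmin_l. assert (Hm2 : m <= t2 - t1) by apply Rmin_r.
    assert (Hu : t1 <= t2 - m / 2 <= t2) by lra.
    apply (I2 (t2 - m/2) (HD _ Hu)); [lra| |apply C; auto].
    rewrite Rabs_left; lra.
Qed.
Definition sgn_ok n x k (b : bool) (t : R) : Prop :=
  if b then 0 < gg n x k t else gg n x k t < 0.

Lemma three_contra n x ts tau (Jel : R -> Prop) S (A : nat -> R)
  (HJint : is_interval Jel) (HS : forall m, In m S -> (m < n)%nat)
  (Haff : forall k u v, (k < n)%nat -> Jel u -> Jel v ->
     gg n x k u - gg n x k v = A k * (u - v))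
  (Hgp3 : forall i j k t, (i < n)%nat -> (j < n)%nat -> (k < n)%nat ->
     i <> j -> j <> k -> i <> k -> in_dom ts tau t -> ~ (x i t = x j t /\ x j t = x k t))
  k (Hmax : forall m, In m S -> Rabs (A m) <= Rabs (A k)) (b : bool)
  (L : list (R * nat * nat))
  (HL : forall tr, In tr L -> good n x ts tau Jel S tr /\ involves k tr = true /\
          sgn_ok n x k b (time tr)) :
  forall a1 a2 a3, In a1 L -> In a2 L -> In a3 L -> a1 <> a2 -> a2 <> a3 -> a1 <> a3 -> False.
Proof.
  assert (Hrel : forall tr, In tr L -> rel n x ts tau Jel S k (partner k tr) (time tr)).
  { intros tr H; destruct (HL tr H) as [G [I _]]; eapply good_rel; eauto. }
  assert (Htime : forall a1 a2, In a1 L -> In a2 L -> time a1 = time a2).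
  { intros a1 a2 H1 H2.
    destruct (HL a1 H1) as [_ [_ S1]]. destruct (HL a2 H2) as [_ [_ S2]].
    assert (Hs : (0 < gg n x k (time a1) /\ 0 < gg n x k (time a2)) \/
                 (gg n x k (time a1) < 0 /\ gg n x k (time a2) < 0)).
    { unfold sgn_ok in *; destruct b; [left|right]; auto. }
    destruct (total_order_T (time a1) (time a2)) as [[Hlt|Heq]|Hgt]; auto; exfalso.
    - exact (same_time_lt n x ts tau Jel S A HJint HS Haff k Hmax _ _ _ _
        (Hrel a1 H1) (Hrel a2 H2) Hlt Hs).
    - apply (same_time_lt n x ts tau Jel S A HJint HS Haff k Hmax _ _ _ _
        (Hrel a2 H2) (Hrel a1 H1) Hgt).
      destruct Hs as [[? ?]|[? ?]]; [left|right]; split; auto. }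
  assert (Hpd : forall a1 a2, In a1 L -> In a2 L -> a1 <> a2 -> partner k a1 <> partner k a2).
  { intros a1 a2 H1 H2 Hne E. apply Hne.
    destruct (HL a1 H1) as [G1 [I1 _]]; destruct (HL a2 H2) as [G2 [I2 _]].
    eapply triple_det; eauto. }
  intros a1 a2 a3 H1 H2 H3 N12 N23 N13.
  pose proof (Hrel a1 H1) as (_&Q1&_&_&D1&E1&_).
  pose proof (Hrel a2 H2) as (_&Q2&_&_&_&E2&_).
  pose proof (Hrel a3 H3) as (_&Q3&_&_&_&E3&_).
  rewrite (Htime a2 a1 H2 H1) in E2. rewrite (Htime a3 a1 H3 H1) in E3.
  apply (Hgp3 (partner k a1) (partner k a2) (partner k a3) (time a1)); auto.
  unfold gg in *. split; lra.
Qed.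
Definition posb n x k (tr : R * nat * nat) : bool :=
  if Rlt_dec 0 (gg n x k (time tr)) then true else false.

Lemma good_mono n x ts tau Jel S S' tr :
  good n x ts tau Jel S tr ->
  (forall m, In m S' -> In m S) ->
  (match tr with (t, s, p) => In s S' /\ In p S' end) ->
  good n x ts tau Jel S' tr.
Proof.
  destruct tr as [[t s] p]. intros (Hl&H1&H2&H3&H4&H5&H6&H7&H8&H9) Hsub [I1 I2].
  refine (conj Hl (conj I1 (conj I2 (conj H3 (conj H4 (conj H5 (conj H6 (conj H7 (conj _ H9))))))))).
  intros m Hm; apply H8; auto.
Qed.

Lemma count n x ts tau (Jel : R -> Prop) (A : nat -> R)
  (HJint : is_interval Jel)
  (Haff : forall k u v, (k < n)%nat -> Jel u -> Jel v ->
     gg n x k u - gg n x k v = A k * (u - v))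
  (Hgp3 : forall i j k t, (i < n)%nat -> (j < n)%nat -> (k < n)%nat ->
     i <> j -> j <> k -> i <> k -> in_dom ts tau t -> ~ (x i t = x j t /\ x j t = x k t)) :
  forall N S l, length S = N -> NoDup S -> (forall m, In m S -> (m < n)%nat) ->
  NoDup l -> (forall tr, In tr l -> good n x ts tau Jel S tr) ->
  (length l <= 4 * N)%nat.
Proof.
  induction N as [|N IH]; intros S l HN HSnd HS Hlnd Hl.
  - destruct S; [|discriminate]. destruct l as [|[[t s] p] l]; simpl; [lia|].
    exfalso. destruct (Hl (t, s, p) (or_introl eq_refl)) as (_&H&_). exact H.
  - assert (HSne : S <> []) by (intro E; subst; discriminate).
    destruct (max_exists (fun m => Rabs (A m)) S HSne) as [k [Hk Hmax]].
    destruct (in_split k S Hk) as [S1 [S2 ES]].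
    rewrite (filter_split (involves k) l).
    assert (Hinv : (length (filter (involves k) l) <= 4)%nat).
    { rewrite (filter_split (posb n x k) (filter (involves k) l)).
      assert (Hgen : forall b : bool,
         (length (filter (fun tr => if b then posb n x k tr else negb (posb n x k tr))
                    (filter (involves k) l)) <= 2)%nat).
      { intros b. apply len_le2; [apply NoDup_filter, NoDup_filter, Hlnd|].
        apply (three_contra n x ts tau Jel S A HJint HS Haff Hgp3 k Hmax b).
        intros tr Htr. apply filter_In in Htr as [Htr Hp].
        apply filter_In in Htr as [Htr Hi].
        pose proof (Hl tr Htr) as G. split; [exact G|split; [exact Hi|]].
        pose proof (good_rel _ _ _ _ _ _ k tr G Hi) as (_&_&_&_&_&_&Hne&_).
        unfold sgn_ok, posb in *. destruct b; destruct (Rlt_dec 0 (gg n x k (time tr)));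
        simpl in Hp; try discriminate; auto. lra. }
      assert (G1 : (length (filter (posb n x k) (filter (involves k) l)) <= 2)%nat)
        by exact (Hgen true).
      assert (G2 : (length (filter (fun tr => negb (posb n x k tr)) (filter (involves k) l)) <= 2)%nat)
        by exact (Hgen false).
      lia. }
    set (S' := S1 ++ S2).
    assert (HS'len : length S' = N).
    { subst S. unfold S'. rewrite length_app in *. simpl in HN. lia. }
    assert (HS'nd : NoDup S') by (subst S; eapply NoDup_remove_1; eauto).
    assert (HkS' : ~ In k S') by (subst S; eapply NoDup_remove_2; eauto).
    assert (Hsub : forall m, In m S' -> In m S).
    { intros m Hm. subst S. unfold S' in Hm. apply in_app_or in Hm.
      apply in_or_app. destruct Hm; [left|right; right]; auto. }
    assert (Hsub2 : forall m, In m S -> m <> k -> In m S').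
    { intros m Hm Hne. subst S. apply in_app_or in Hm. unfold S'. apply in_or_app.
      destruct Hm as [Hm|[E|Hm]]; auto; congruence. }
    assert (Hrest : (length (filter (fun tr => negb (involves k tr)) l) <= 4 * N)%nat).
    { apply (IH S'); auto. apply NoDup_filter; auto.
      intros tr Htr. apply filter_In in Htr as [Htr Hi].
      pose proof (Hl tr Htr) as G. apply (good_mono _ _ _ _ _ S); auto.
      destruct tr as [[t s] p]. destruct G as (_&Hs&Hp&_).
      unfold involves in Hi. destruct (Nat.eqb_spec s k); destruct (Nat.eqb_spec p k);
      simpl in Hi; try discriminate. split; apply Hsub2; auto. }
    lia.
Qed.
Lemma conn_sym n x eps t a b :
  eps_connected n x eps t a b -> eps_connected n x eps t b a.
Proof.
  unfold eps_connected. induction 1.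
  - apply rt_step. destruct H as (H1&H2&H3). split; [|split]; auto.
    rewrite Rabs_minus_sym; auto.
  - apply rt_refl.
  - eapply rt_trans; eauto.
Qed.

Lemma conn_between n x eps t (Heps : eps > 0) a b :
  clos_refl_trans_1n nat (close_at n x eps t) a b -> (a < n)%nat ->
  forall m, (m < n)%nat -> (x a t <= x m t <= x b t \/ x b t <= x m t <= x a t) ->
  eps_connected n x eps t a m.
Proof.
  induction 1 as [a|a c b Hac Hcb IH]; intros Ha m Hm Hb.
  - apply rt_step. split; [|split]; auto.
    destruct Hb;
    unfold Rabs; destruct (Rcase_abs (x a t - x m t)); lra.
  - destruct Hac as (Ha'&Hc&Hd).
    destruct (between_real (x a t) (x b t) (x c t) (x m t) Hb) as [Hb'|Hle].
    + apply rt_trans with c; [apply rt_step; split; [|split]; auto|]. apply IH; auto.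
    + apply rt_step. split; [|split]; auto. lra.
Qed.

Lemma glob_min n x eps t (Heps : eps > 0) X s p :
  is_class n x eps t X -> X s -> X p ->
  gg n x s t = - gg n x p t ->
  (forall k, X k -> fdist n x s t <= fdist n x k t) ->
  forall m, (m < n)%nat -> Rabs (gg n x s t) <= Rabs (gg n x m t).
Proof.
  intros [s0 [Hs0 HX]] Hs Hp E Hmin m Hm.
  destruct (Rle_dec (Rabs (gg n x s t)) (Rabs (gg n x m t))) as [H|H]; auto.
  exfalso. apply Rnot_le_lt in H.
  apply HX in Hs as [HsN Hs0s]. apply HX in Hp as [HpN Hs0p].
  assert (Hsp : eps_connected n x eps t s p).
  { eapply rt_trans; [apply conn_sym; exact Hs0s|exact Hs0p]. }
  apply clos_rt_rt1n in Hsp.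
  assert (Hbet : x s t <= x m t <= x p t \/ x p t <= x m t <= x s t).
  { unfold gg in *. revert H. unfold Rabs.
    destruct (Rcase_abs (x s t - Icurve n x t)); destruct (Rcase_abs (x m t - Icurve n x t));
    intros; first [left; lra | right; lra]. }
  pose proof (conn_between n x eps t Heps s p Hsp HsN m Hm Hbet) as Hsm.
  assert (HXm : X m) by (apply HX; split; [exact Hm|]; apply rt_trans with s; auto).
  specialize (Hmin m HXm). unfold fdist, gg in *. lra.
Qed.
Theorem mainTheorem5 (n : nat) (x : nat -> R -> R) (eps : R)
  (ts : nat -> R) (tau : nat)
  (Hn : (0 < n)%nat) (Heps : eps > 0)
  (Hts : increasing_times ts tau)
  (Hpl : piecewise_linear n x ts tau)
  (Hgp : general_position n x eps ts tau)
  (Jel : R -> Prop) (HJel : elementary_interval n x ts tau Jel)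
  (bps : list (R * nat * nat))
  (Hnd : NoDup bps)
  (Hbps : forall t s p, In (t, s, p) bps ->
     (s < p)%nat /\ Jel t /\ type_ii_break_of_some_envelope n x eps ts tau t s p) :
  INR (length bps) <= 13 / 2 * INR n.
Proof.
  destruct HJel as [i [Hi [HJint [HJsub [[a0 [b0 HI]] _]]]]].
  assert (HA : exists A : nat -> R, forall k u v, (k < n)%nat -> Jel u -> Jel v ->
             gg n x k u - gg n x k v = A k * (u - v)).
  { destruct (classic (exists u0 u1, Jel u0 /\ Jel u1 /\ u0 < u1))
      as [[u0 [u1 [J0 [J1 Hlt]]]]|Hno].
    - exists (fun k => (gg n x k u1 - gg n x k u0) / (u1 - u0)).
      intros k u v Hk Ju Jv.
      destruct (Hpl k i Hk Hi) as [a [b Hab]].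
      assert (Hw : forall w, Jel w -> gg n x k w = (a - a0) * w + (b - b0)).
      { intros w Jw. unfold gg. rewrite (Hab w (HJsub w Jw)), (HI w Jw). ring. }
      rewrite (Hw u Ju), (Hw v Jv), (Hw u0 J0), (Hw u1 J1). field. lra.
    - exists (fun _ => 0). intros k u v Hk Ju Jv.
      destruct (total_order_T u v) as [[Hlt| ->]|Hgt].
      + exfalso; apply Hno; exists u, v; auto.
      + ring.
      + exfalso; apply Hno; exists v, u; auto. }
  destruct HA as [A Haff].
  assert (Hgp3 : forall i j k t, (i < n)%nat -> (j < n)%nat -> (k < n)%nat ->
     i <> j -> j <> k -> i <> k -> in_dom ts tau t -> ~ (x i t = x j t /\ x j t = x k t)).
  { destruct Hgp as [G _]. exact G. }
  assert (Hgood : forall tr, In tr bps -> good n x ts tau Jel (seq 0 n) tr).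
  { intros [[t s] p] Htr. destruct (Hbps t s p Htr) as [Hlt [Jt [X [J [Hcp [Hbp Htii]]]]]].
    destruct Hcp as [_ [_ [Hcl _]]].
    destruct Hbp as (Hsp&Xs&Xp&Jt'&Hfeq&Hmin).
    destruct (Hcl t Jt') as [Hdom Hclass].
    destruct Htii as (E&Hne&d&Hd&Hiso).
    assert (HsN : (s < n)%nat).
    { destruct Hclass as [s0 [_ HX]]. apply HX in Xs. tauto. }
    assert (HpN : (p < n)%nat).
    { destruct Hclass as [s0 [_ HX]]. apply HX in Xp. tauto. }
    split; [exact Hlt|].
    split; [apply in_seq; lia|]. split; [apply in_seq; lia|].
    split; [exact Hsp|]. split; [exact Jt|]. split; [exact Hdom|].
    split; [exact E|]. split; [exact Hne|]. split.
    - intros m Hm. apply in_seq in Hm.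
      apply (glob_min n x eps t Heps X s p Hclass Xs Xp E Hmin m). lia.
    - exists d; split; [exact Hd|]. exact Hiso. }
  pose proof (count n x ts tau Jel A HJint Haff Hgp3 n (seq 0 n) bps
     (length_seq n 0) (seq_NoDup n 0)
     (fun m Hm => proj2 (proj1 (in_seq n 0 m) Hm)) Hnd Hgood) as Hc.
  apply le_INR in Hc. rewrite mult_INR in Hc. simpl in Hc.
  assert (0 <= INR n) by apply pos_INR. lra.
Qed.
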